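(* Let $H=(V,\mathcal E)$ be a finite hypergraph and let $\mathcal L=\{L_v\}_{v\in V}$ be a family of sets of positive integers such that $|L_v|\ge\min(\deg_H(v)+1,\,s(H))$ for every $v\in V$. Then $H$ admits a unique-maximum coloring from $\mathcal L$.
   Context: A hypergraph $H=(V,\mathcal E)$ has finite vertex set and a set $\mathcal E$ of nonempty subsets of $V$. $\deg_H(v)$ is the number of hyperedges containing $v$. $s(H)$ is the minimum positive integer $s$ with $|\mathcal E|\le s(s-1)/2$. A coloring $C\colon V\to\mathbb Z_{>0}$ is unique-maximum if in every hyperedge the maximum color is attained by exactly one vertex; $H$ admits such a coloring from $\mathcal L$ if moreover $C(v)\in L_v$ for all $v$. *)

(* Defs.v *)
From mathcomp Require Import all_boot.
Set Implicit Arguments. Unset Strict Implicit. Unset Printing Implicit Defensive.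

Definition hypergraph (V : finType) (E : {set {set V}}) : Prop :=
  forall e, e \in E -> e != set0.

Definition hdeg (V : finType) (E : {set {set V}}) (v : V) : nat :=
  #|[set e in E | v \in e]|.

(* s(m) = minimum positive integer s with m <= s(s-1)/2.
   We search k = s-1 over 0..m+1 (k = m+1 always works). *)
Definition s_of (m : nat) : nat :=
  (find (fun k => m <= (k.+1 * k) %/ 2) (iota 0 m.+2)).+1.

Definition sH (V : finType) (E : {set {set V}}) : nat := s_of #|E|.

Definition card_ge (A : nat -> Prop) (k : nat) : Prop :=
  exists s : seq nat, uniq s /\ size s = k /\ (forall x, x \in s -> A x).

Definition unique_max (V : finType) (E : {set {set V}}) (C : V -> nat) : Prop :=
  forall e, e \in E ->
    exists v, [/\ v \in e, forall w, w \in e -> C w <= C v &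
                 forall w, w \in e -> C w = C v -> w = v].

(* Main.v *)
Require Import Defs.
From mathcomp Require Import all_boot.
Set Implicit Arguments. Unset Strict Implicit. Unset Printing Implicit Defensive.

Lemma s_of_has m : has (fun k => m <= (k.+1 * k) %/ 2) (iota 0 m.+2).
Proof.
apply/hasP; exists m.+1; first by rewrite mem_iota add0n ltnSn.
rewrite /= leq_divRL // [m.+2 * _]mulnC; apply: leq_mul => //.
Qed.

Lemma s_of_min m k : m <= (k.+1 * k) %/ 2 -> s_of m <= k.+1.
Proof.
move=> Hk; rewrite /s_of ltnS.
case: (leqP (find (fun k => m <= (k.+1 * k) %/ 2) (iota 0 m.+2)) k) => // Hlt.
have Hf := s_of_has m; rewrite has_find size_iota in Hf.
have Hkm : k < m.+2 by apply: ltn_trans Hlt Hf.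
by have := before_find 0 Hlt; rewrite nth_iota // add0n Hk.
Qed.

Lemma s_of_spec m : m <= (s_of m * (s_of m).-1) %/ 2.
Proof.
have Hf := s_of_has m.
have := nth_find 0 Hf; rewrite /s_of.
move: (Hf); rewrite has_find size_iota => Hlt.
by rewrite nth_iota // add0n -pred_Sn.
Qed.

Lemma s_of_mono m m' : m <= m' -> s_of m <= s_of m'.
Proof.
move=> H; have := s_of_spec m'; rewrite {2 3}/s_of -pred_Sn => H2.
apply: s_of_min; exact: leq_trans H H2.
Qed.

Lemma uniq_avoid (s t : seq nat) : uniq s -> size t < size s -> exists2 x, x \in s & x \notin t.
Proof.
move=> Us Hst; case: (boolP (all (fun x => x \in t) s)) => [/allP Ha|].
  by have := uniq_leq_size Us Ha; rewrite leqNgt Hst.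
by case/allPn => x Hx Hn; exists x.
Qed.

Lemma max_seq_mem (s : seq nat) : s != [::] -> \max_(x <- s) x \in s.
Proof.
elim: s => // a s IH _; rewrite big_cons inE.
case: (eqVneq s [::]) => [->|Hs]; first by rewrite big_nil maxn0 eqxx.
case: (leqP (\max_(x <- s) x) a) => H.
  by rewrite eqxx.
by rewrite IH ?orbT.
Qed.

Lemma gen_base (V : finType) (U : {set V}) (E : {set {set V}}) (Ls : V -> seq nat) :
  U = set0 -> (forall e, e \in E -> (e != set0) && (e \subset U)) ->
  exists C : V -> nat, (forall v, v \in U -> C v \in Ls v) /\ unique_max E C.
Proof.
move=> U0 HE; exists (fun _ => 0); split => [v|e He]; first by rewrite U0 inE.
by move: (HE e He); rewrite U0 subset0 => /andP[/negP].
Qed.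

Lemma gen (V : finType) n : forall (U : {set V}) (E : {set {set V}}) (Ls : V -> seq nat),
 #|U| <= n ->
 (forall e, e \in E -> (e != set0) && (e \subset U)) ->
 (forall v, v \in U -> uniq (Ls v) /\ minn (hdeg E v).+1 (sH E) <= size (Ls v)) ->
 exists C : V -> nat, (forall v, v \in U -> C v \in Ls v) /\ unique_max E C.
Proof.
elim: n => [|n IH] U E Ls HU HE HL.
  by apply: gen_base HE; apply/eqP; rewrite -cards_eq0 -leqn0.
case: (eqVneq U set0) => [U0|Un0]; first exact: gen_base HE.
case: (boolP [exists v in U, (hdeg E v).+1 <= sH E]).
- case/existsP => v /andP[vU Hv].
  set U' := U :\ v.
  set E' := [set e :\ v | e in E] :\ set0.
  have HU' : #|U'| <= n by move: HU; rewrite (cardsD1 v U) vU add1n ltnS.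
  have HE' : forall e, e \in E' -> (e != set0) && (e \subset U').
    move=> e; rewrite in_setD1 => /andP[-> /imsetP[e0 He0 ->]] /=.
    by apply: setSD; case/andP: (HE _ He0).
  have cardE' : #|E'| <= #|E|.
    exact: leq_trans (subset_leq_card (subD1set _ _)) (leq_imset_card _ _).
  have degE' : forall w, w != v -> hdeg E' w <= hdeg E w.
    move=> w wv; rewrite /hdeg.
    apply: leq_trans (leq_imset_card (fun e => e :\ v) [set e in E | w \in e]).
    apply: subset_leq_card; apply/subsetP => e'; rewrite inE => /andP[He' we'].
    move: He'; rewrite in_setD1 => /andP[_ /imsetP[e0 He0 De]].
    apply/imsetP; exists e0 => //; rewrite inE He0 /=.
    by move: we'; rewrite De in_setD1 => /andP[].
  have HL' : forall w, w \in U' -> uniq (Ls w) /\ minn (hdeg E' w).+1 (sH E') <= size (Ls w).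
    move=> w; rewrite in_setD1 => /andP[wv wU]; case: (HL w wU) => Uw Sw; split => //.
    apply: leq_trans Sw.
    by rewrite /sH leq_min !geq_min ltnS degE' //= (s_of_mono cardE') orbT.
  have [C' [HC'1 HC'2]] := IH U' E' Ls HU' HE' HL'.
  set F := [seq \max_(w in e :\ v) C' w | e <- enum [set e in E | v \in e]].
  have [c cL cF] : exists2 c, c \in Ls v & c \notin F.
    case: (HL v vU) => Uv Sv; apply: uniq_avoid => //.
    by rewrite size_map -cardE; move: Sv; rewrite (minn_idPl Hv).
  exists (fun w => if w == v then c else C' w); split.
    move=> w wU; case: eqP => [->//|/eqP wv]; apply: HC'1; by rewrite in_setD1 wv.
  move=> e He.
  case: (boolP (v \in e)) => ve; last first.
    have ee : e :\ v = e.
      by apply/setP => x; rewrite in_setD1; case: eqVneq => // ->; rewrite (negbTE ve).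
    have He' : e \in E'.
      rewrite in_setD1; case/andP: (HE e He) => -> _ /=.
      by apply/imsetP; exists e.
    case: (HC'2 e He') => u [ue Hmax Huniq].
    have uv : u != v by apply: contraNneq ve => <-.
    exists u; split => //.
      move=> w we; have wv : w != v by apply: contraNneq ve => <-.
      by rewrite /= (negbTE wv) (negbTE uv); exact: Hmax.
    move=> w we; have wv : w != v by apply: contraNneq ve => <-.
    by rewrite /= (negbTE wv) (negbTE uv); exact: Huniq.
  case: (eqVneq (e :\ v) set0) => [e0|en0].
    have onlyv : forall w, w \in e -> w = v.
      move=> w we; apply/eqP; apply/negPn/negP => wv.
      have : w \in e :\ v by rewrite in_setD1 wv we.
      by rewrite e0 inE.
    by exists v; split => // w we; rewrite (onlyv w we).
  have He' : e :\ v \in E' by rewrite in_setD1 en0; apply/imsetP; exists e.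
  case: (HC'2 _ He') => u [ue Hmax Huniq].
  have mF : C' u \in F.
    have -> : C' u = \max_(w in e :\ v) C' w.
      apply/eqP; rewrite eqn_leq (leq_bigmax_cond u ue) /=.
      by apply/bigmax_leqP => w; exact: Hmax.
    by apply/mapP; exists e => //; rewrite mem_enum inE He ve.
  have cm : c != C' u by apply: contraNneq cF => ->.
  have uv : u != v by move: ue; rewrite in_setD1 => /andP[].
  have ueS : u \in e by move: ue; rewrite in_setD1 => /andP[].
  case: (ltnP c (C' u)) => [clt|cge].
    exists u; split => //.
      move=> w we; rewrite /= (negbTE uv); case: (eqVneq w v) => [_|wv] /=.
        exact: ltnW.
      by apply: Hmax; rewrite in_setD1 wv we.
    move=> w we; rewrite /= (negbTE uv); case: (eqVneq w v) => [_ Hc|wv] /=.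
      by rewrite Hc ltnn in clt.
    by apply: Huniq; rewrite in_setD1 wv we.
  have cgt : C' u < c by rewrite ltn_neqAle eq_sym cm cge.
  exists v; rewrite /= eqxx; split => //.
    move=> w we; case: (eqVneq w v) => [_|wv] //=.
    apply: leq_trans (Hmax w _) (ltnW cgt); by rewrite in_setD1 wv we.
  move=> w we; case: (eqVneq w v) => [->|wv] //= Hw.
  have : C' w <= C' u by apply: Hmax; rewrite in_setD1 wv we.
  by rewrite Hw leqNgt cgt.
- move/existsPn => Hall.
  have HB : forall v, v \in U -> sH E <= hdeg E v.
    by move=> v vU; move: (Hall v); rewrite vU /= -ltnNge ltnS.
  have cU : 0 < #|U| by rewrite card_gt0.
  case: (eq_bigmax_cond (fun v => \max_(x <- Ls v) x) cU) => v0 v0U HM.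
  set M := \max_(x <- Ls v0) x in HM.
  have Hd : hdeg E v0 <= #|E|.
    by apply: subset_leq_card; apply/subsetP => e; rewrite inE => /andP[].
  have [t st] : exists t, sH E = t.+2.
    have s1 : 0 < sH E by [].
    have Hs := s_of_spec #|E|.
    move: (HB v0 v0U) Hs Hd s1; rewrite /sH; case: (s_of #|E|) => [|[|t]] //.
      move=> H1 H2 H3 _; have := leq_trans H1 (leq_trans H3 H2).
      by [].
    by move=> *; exists t.
  have sizeL : forall w, w \in U -> t.+2 <= size (Ls w).
    move=> w wU; case: (HL w wU) => _; rewrite (minn_idPr _) ?st //.
    by rewrite -st; apply: leq_trans (HB w wU) _.
  have MLs : M \in Ls v0.
    apply: max_seq_mem; rewrite -size_eq0 -lt0n.
    exact: leq_trans _ (sizeL v0 v0U).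
  have Mge : forall w x, w \in U -> x \in Ls w -> x <= M.
    move=> w x wU xL; apply: leq_trans (leq_bigmax_seq x xL isT) _.
    by rewrite -HM; apply: (leq_bigmax_cond (P := fun i => i \in U) w wU).
  set U' := U :\ v0.
  set E' := E :\: [set e : {set V} | v0 \in e].
  set Ls' := fun w => rem M (Ls w).
  have HU' : #|U'| <= n by move: HU; rewrite (cardsD1 v0 U) v0U add1n ltnS.
  have HE' : forall e, e \in E' -> (e != set0) && (e \subset U').
    move=> e; rewrite in_setD inE => /andP[v0e He].
    case/andP: (HE e He) => -> eU /=.
    apply/subsetP => x xe; rewrite in_setD1 (subsetP eU x xe) andbT.
    by apply: contraNneq v0e => <-.
  have cardE' : #|E'| + hdeg E v0 = #|E|.
    rewrite -(cardsID [set e : {set V} | v0 \in e] E) addnC; congr (_ + _).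
    by rewrite /hdeg; apply: eq_card => e; rewrite !inE.
  have sE' : sH E' <= t.+1.
    apply: s_of_min.
    have Hs := s_of_spec #|E|; rewrite -/(sH E) st -pred_Sn in Hs.
    have E2 : t.+2 * t.+1 = t.+1 * 2 + t.+1 * t.
      by rewrite -mulnDr addnC addn2 mulnC.
    rewrite E2 divnMDl // in Hs.
    have Hdeg : t.+2 <= hdeg E v0 by rewrite -st; exact: HB.
    rewrite -cardE' in Hs.
    have := leq_trans (leq_add (leqnn #|E'|) Hdeg) Hs.
    rewrite addnS addnC ltn_add2l.
    exact: ltnW.
  have HL' : forall w, w \in U' -> uniq (Ls' w) /\ minn (hdeg E' w).+1 (sH E') <= size (Ls' w).
    move=> w; rewrite in_setD1 => /andP[wv wU]; case: (HL w wU) => Uw _; split.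
      exact: rem_uniq.
    apply: leq_trans (geq_minr _ _) _; apply: leq_trans sE' _.
    rewrite /Ls'; case: (boolP (M \in Ls w)) => HMw.
      by rewrite size_rem // -ltnS (ltn_predK (sizeL w wU)) sizeL.
    by rewrite rem_id // ltnW // sizeL.
  have [C' [HC'1 HC'2]] := IH U' E' Ls' HU' HE' HL'.
  have Clt : forall w, w \in U' -> C' w < M /\ C' w \in Ls w.
    move=> w wU'; have := HC'1 w wU'; rewrite /Ls' mem_rem_uniq; last first.
      by case: (HL w (subsetP (subD1set U v0) w wU')).
    rewrite inE => /andP[HwM HwL]; split => //.
    rewrite ltn_neqAle HwM; apply: Mge HwL; exact: (subsetP (subD1set U v0) w wU').
  exists (fun w => if w == v0 then M else C' w); split.
    move=> w wU; case: (eqVneq w v0) => [->|wv] //=.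
    by case: (Clt w _) => //; rewrite in_setD1 wv wU.
  move=> e He.
  have eU : e \subset U by case/andP: (HE e He).
  case: (boolP (v0 \in e)) => ve.
    exists v0; rewrite /= eqxx; split => //.
      move=> w we; case: (eqVneq w v0) => [_|wv] //=.
      have wU' : w \in U' by rewrite in_setD1 wv (subsetP eU _ we).
      by case: (Clt w wU') => /ltnW.
    move=> w we; case: (eqVneq w v0) => [->|wv] //= Hw.
    have wU' : w \in U' by rewrite in_setD1 wv (subsetP eU _ we).
    by case: (Clt w wU'); rewrite Hw ltnn.
  have He' : e \in E' by rewrite in_setD inE ve He.
  case: (HC'2 e He') => u [ue Hmax Huniq].
  have uv : u != v0 by apply: contraNneq ve => <-.
  exists u; split => //.
    move=> w we; have wv : w != v0 by apply: contraNneq ve => <-.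
    by rewrite /= (negbTE wv) (negbTE uv); exact: Hmax.
  move=> w we; have wv : w != v0 by apply: contraNneq ve => <-.
  by rewrite /= (negbTE wv) (negbTE uv); exact: Huniq.
Qed.

Theorem theorem5p3 (V : finType) (E : {set {set V}}) (L : V -> nat -> Prop)
  (hH : hypergraph E)
  (hpos : forall v x, L v x -> 0 < x)
  (hL : forall v, card_ge (L v) (minn (hdeg E v).+1 (sH E))) :
  exists C : V -> nat,
    (forall v, 0 < C v) /\ (forall v, L v (C v)) /\ unique_max E C.
Proof.
have [Ls HLs] := fin_all_exists hL.
have [C [HC1 HC2]] := @gen V #|V| [set: V] E Ls (max_card _)
  (fun e He => andb_true_intro (conj (hH e He) (subsetT e)))
  (fun v _ => let: conj u (conj sz _) := HLs v in conj u (eq_leq (esym sz))).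
have HCL : forall v, L v (C v).
  by move=> v; case: (HLs v) => _ [_ H]; apply: H; apply: HC1; rewrite inE.
by exists C; split => // v; apply: hpos (HCL v).
Qed.
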